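(* Let $0<a,b<1$, $f\ge3$, and let $\overline w_{m,n}$ be the array defined in the context. Then for all integers $1\le m<n$, $\overline w_{m,n}=\overline w_{n-1,m-1}$.
   Context: Let $r,y,z$ be indeterminates. For $c\in(0,1)$: $\omega_c:=1-(1-c)^2r^2y^2z^2$, $\tau_c:=1+(1-c)^2r^2z^2y(1-y)$, $x_c:=c^2z^2\tau_c^2$, $\beta_c:=1+z^2(c^2-(1-c)^2r^2(y^2+c^2(1-y)^2z^2))$; $w^*_0(c):=(\beta_c-\omega_c)/x_c$, $w^*_1(c):=1$, $w^*_{n+1}(c):=\beta_cw^*_n(c)-x_cw^*_{n-1}(c)$ ($n\ge1$). Also $\tau(a,b):=1+(1-a)(1-b)r^2z^2y(1-y)$, $x(a,b):=b^2z^2\tau(a,b)^2$, $x(b,a):=a^2z^2\tau(a,b)^2$, $\beta(a,b):=\beta_b-(b-a)b^2(1-b)r^2(1-y)^2z^4$, $\beta(b,a):=\beta_a-(a-b)a^2(1-a)r^2(1-y)^2z^4$. Define $\overline w_{m,m+1}=\overline w_{m+1,m}:=1$ ($m\ge0$), and for $n-m\ge2$ (indices $\ge0$): upward: $\overline w_{m,m+\ell}:=w^*_\ell(a)$ if $m+\ell\le f$, $:=w^*_\ell(b)$ if $f\le m$; $\overline w_{f-\ell,f+1}:=\frac{1-b}{1-a}w^*_{\ell+1}(a)+\frac{b-a}{1-a}w^*_\ell(a)$ ($1\le\ell\le f$); $\overline w_{m,f+2}:=\beta(a,b)\overline w_{m,f+1}-x(a,b)\overline w_{m,f}$ ($m\le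 f-1$); $\overline w_{m,f+j+1}:=\beta_b\overline w_{m,f+j}-x_b\overline w_{m,f+j-1}$ ($m\le f-1$, $j\ge2$). Downward: $\overline w_{m+\ell,m}:=w^*_\ell(a)$ if $m+\ell\le f-1$, $:=w^*_\ell(b)$ if $f-1\le m$; $\overline w_{f+j,f-2}:=\frac{1-a}{1-b}w^*_{j+2}(b)+\frac{a-b}{1-b}w^*_{j+1}(b)$ ($j\ge0$); $\overline w_{n,f-3}:=\beta(b,a)\overline w_{n,f-2}-x(b,a)\overline w_{n,f-1}$ ($n\ge f$); $\overline w_{n,f-\ell-2}:=\beta_a\overline w_{n,f-\ell-1}-x_a\overline w_{n,f-\ell}$ ($n\ge f$, $\ell\ge2$). *)

(* Defs.v *)
(* polynomial identities in the indeterminates r, y, z over a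
   real field, computed in the field of rational functions R(r,y,z). *)
From HB Require Import structures.
From mathcomp Require Import all_boot all_order all_algebra.
From mathcomp Require Import fraction.
From mathcomp Require Import mpoly.
Set Implicit Arguments. Unset Strict Implicit. Unset Printing Implicit Defensive.
Import Order.TTheory GRing.Theory Num.Theory.
Local Open Scope ring_scope.

Definition RF (R : realFieldType) := {fraction {mpoly R[3]}}.

Definition cst (R : realFieldType) (c : R) : RF R := tofrac (c%:MP).
Definition var_r (R : realFieldType) : RF R := tofrac ('X_(@Ordinal 3 0 isT)).
Definition var_y (R : realFieldType) : RF R := tofrac ('X_(@Ordinal 3 1 isT)).
Definition var_z (R : realFieldType) : RF R := tofrac ('X_(@Ordinal 3 2 isT)).

Section Defs.
Variable R : realFieldType.
Local Notation K := (RF R).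
Local Notation "c %:C" := (cst c) (at level 2, format "c %:C").
Local Notation r := (var_r R).
Local Notation y := (var_y R).
Local Notation z := (var_z R).

Definition omega (c : R) : K := 1 - ((1 - c) ^+ 2)%:C * r ^+ 2 * y ^+ 2 * z ^+ 2.
Definition tau (c : R) : K := 1 + ((1 - c) ^+ 2)%:C * r ^+ 2 * z ^+ 2 * y * (1 - y).
Definition xc (c : R) : K := (c ^+ 2)%:C * z ^+ 2 * tau c ^+ 2.
Definition beta (c : R) : K :=
  1 + z ^+ 2 * ((c ^+ 2)%:C - ((1 - c) ^+ 2)%:C * r ^+ 2 *
                  (y ^+ 2 + (c ^+ 2)%:C * (1 - y) ^+ 2 * z ^+ 2)).

(* wstar_pair c n = (w*_n(c), w*_{n+1}(c)) *)
Fixpoint wstar_pair (c : R) (n : nat) : K * K :=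
  match n with
  | 0%N => ((beta c - omega c) / xc c, 1)
  | S k => let p := wstar_pair c k in (p.2, beta c * p.2 - xc c * p.1)
  end.
Definition wstar (c : R) (n : nat) : K := (wstar_pair c n).1.

Definition tau2 (a b : R) : K :=
  1 + ((1 - a) * (1 - b))%:C * r ^+ 2 * z ^+ 2 * y * (1 - y).
Definition x_ab (a b : R) : K := (b ^+ 2)%:C * z ^+ 2 * tau2 a b ^+ 2.
Definition x_ba (a b : R) : K := (a ^+ 2)%:C * z ^+ 2 * tau2 a b ^+ 2.
Definition beta_ab (a b : R) : K :=
  beta b - ((b - a) * b ^+ 2 * (1 - b))%:C * r ^+ 2 * (1 - y) ^+ 2 * z ^+ 4.
Definition beta_ba (a b : R) : K :=
  beta a - ((a - b) * a ^+ 2 * (1 - a))%:C * r ^+ 2 * (1 - y) ^+ 2 * z ^+ 4.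

(* Upward part, case m <= f-1 < f+1 <= n.
   wup_col a b f m k = wbar_{m, f+1+k}. *)
Fixpoint wup_col (a b : R) (f m k : nat) : K :=
  match k with
  | 0%N => ((1 - b) / (1 - a))%:C * wstar a (f - m).+1
           + ((b - a) / (1 - a))%:C * wstar a (f - m)
  | S k1 =>
    match k1 with
    | 0%N => beta_ab a b * wup_col a b f m k1
             - x_ab a b * (if m.+1 == f then 1 else wstar a (f - m))
    | S k2 => beta b * wup_col a b f m k1 - xc b * wup_col a b f m k2
    end
  end.

Definition wup (a b : R) (f m n : nat) : K :=
  if n == m.+1 then 1
  else if (n <= f)%N then wstar a (n - m)
  else if (f <= m)%N then wstar b (n - m)
  else wup_col a b f m (n - f.+1).

(* Downward part, case m <= f-2 and f <= n.
   wdown_col a b f n k = wbar_{n, f-2-k}. *)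
Fixpoint wdown_col (a b : R) (f n k : nat) : K :=
  match k with
  | 0%N => ((1 - a) / (1 - b))%:C * wstar b (n - f).+2
           + ((a - b) / (1 - b))%:C * wstar b (n - f).+1
  | S k1 =>
    match k1 with
    | 0%N => beta_ba a b * wdown_col a b f n k1
             - x_ba a b * (if n == f then 1 else wstar b (n - f).+1)
    | S k2 => beta a * wdown_col a b f n k1 - xc a * wdown_col a b f n k2
    end
  end.

Definition wdown (a b : R) (f n m : nat) : K :=
  if n == m.+1 then 1
  else if (n <= f.-1)%N then wstar a (n - m)
  else if (f.-1 <= m)%N then wstar b (n - m)
  else wdown_col a b f n (f - 2 - m).

(* The full array wbar_{m,n}; the diagonal m = n is not defined in the paper
   and is set to 0 here (it never occurs in the statement). *)
Definition wbar (a b : R) (f m n : nat) : K :=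
  if (m < n)%N then wup a b f m n
  else if (n < m)%N then wdown a b f m n
  else 0.

End Defs.

(* Main.v *)
Require Import Defs.
From mathcomp Require Import all_boot all_order all_algebra.
From mathcomp Require Import fraction mpoly.
From mathcomp Require Import ring lra zify.
Import Order.TTheory GRing.Theory Num.Theory.
Local Open Scope ring_scope.

Lemma cstM (R : realFieldType) (x y : R) : cst (x * y) = cst x * cst y.
Proof. by rewrite /cst rmorphM rmorphM. Qed.
Lemma cstD (R : realFieldType) (x y : R) : cst (x + y) = cst x + cst y.
Proof. by rewrite /cst rmorphD rmorphD. Qed.
Lemma cstB (R : realFieldType) (x y : R) : cst (x - y) = cst x - cst y.
Proof. by rewrite /cst rmorphB rmorphB. Qed.
Lemma cst1 (R : realFieldType) : cst (1 : R) = 1.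
Proof. by rewrite /cst mpolyC1 tofrac1. Qed.
Lemma cstX (R : realFieldType) (x : R) n : cst (x ^+ n) = cst x ^+ n.
Proof. by rewrite /cst rmorphXn rmorphXn. Qed.
Lemma cst_eq0 (R : realFieldType) (x : R) : (cst x == 0) = (x == 0).
Proof. by rewrite /cst tofrac_eq0 mpolyC_eq0. Qed.
Lemma cstV (R : realFieldType) (x : R) : cst (x^-1) = (cst x)^-1.
Proof.
have [->|nx] := eqVneq x 0; first by rewrite invr0 /cst !rmorph0 invr0.
have cx : cst x != 0 by rewrite cst_eq0.
apply: (mulfI cx); rewrite -cstM mulfV // mulfV //; exact: cst1.
Qed.
Lemma cstdiv (R : realFieldType) (x y : R) : cst (x / y) = cst x / cst y.
Proof. by rewrite cstM cstV. Qed.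

Lemma cstN (R : realFieldType) (x : R) : cst (- x) = - cst x.
Proof. by rewrite /cst !rmorphN. Qed.
Definition cstE := (cstdiv, cstX, cstB, cstN, cstM, cstD, cst1).

Lemma var_z_neq0 (R : realFieldType) : var_z R != 0.
Proof.
rewrite /var_z tofrac_eq0; apply/negP => /eqP H.
have := congr1 (meval (fun _ => (1:R))) H.
by rewrite mevalXU meval0 => /eqP; rewrite oner_eq0.
Qed.

Lemma tau_neq0 (R : realFieldType) (c : R) : tau c != 0.
Proof.
pose X0 : {mpoly R[3]} := 'X_(@Ordinal 3 0 isT).
pose X1 : {mpoly R[3]} := 'X_(@Ordinal 3 1 isT).
pose X2 : {mpoly R[3]} := 'X_(@Ordinal 3 2 isT).
pose P := 1 + ((1 - c) ^+ 2)%:MP * X0 ^+ 2 * X2 ^+ 2 * X1 * (1 - X1).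
have -> : tau c = tofrac P.
  by rewrite /tau /P /cst /var_r /var_y /var_z !(rmorphM, rmorphXn, rmorphB, rmorphD, tofrac1).
rewrite tofrac_eq0; apply/negP => /eqP H.
have := congr1 (meval (fun _ => (0:R))) H.
rewrite /P !(mevalM, mevalD, mevalB, mevalXU, mevalC, meval1, rmorphXn).
rewrite /= => E; move: E; rewrite !(mulr0, mul0r, expr0n) addr0 => /eqP; rewrite oner_eq0.
by [].
Qed.

Lemma xc_neq0 (R : realFieldType) (c : R) : c != 0 -> xc c != 0.
Proof.
move=> hc; rewrite /xc !mulf_neq0 ?expf_neq0 ?tau_neq0 ?var_z_neq0 //.
by rewrite cst_eq0 expf_neq0.
Qed.

Lemma wstar_rec (R : realFieldType) (c : R) i :
  wstar c i.+2 = beta c * wstar c i.+1 - xc c * wstar c i.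
Proof. by []. Qed.
Lemma wstar1 (R : realFieldType) (c : R) : wstar c 1 = 1.
Proof. by []. Qed.
Lemma wstar2 (R : realFieldType) (c : R) : c != 0 -> wstar c 2 = omega c.
Proof.
move=> hc; rewrite wstar_rec wstar1 /wstar /= mulr1.
rewrite mulrCA mulfV ?xc_neq0 //; ring.
Qed.
Lemma wstar3 (R : realFieldType) (c : R) : c != 0 ->
  wstar c 3 = beta c * omega c - xc c.
Proof. by move=> hc; rewrite wstar_rec wstar2 // wstar1 mulr1. Qed.

Definition rec2 {K : comRingType} (be x : K) (s : nat -> K) :=
  forall i, s i.+2 = be * s i.+1 - x * s i.

Lemma rec2_eq {K : comRingType} (be x : K) s t :
  rec2 be x s -> rec2 be x t -> s 0%N = t 0%N -> s 1%N = t 1%N -> forall i, s i = t i.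
Proof.
move=> Hs Ht h0 h1.
suff H : forall i, s i = t i /\ s i.+1 = t i.+1 by move=> i; case: (H i).
elim=> [|i [e1 e2]]; first by [].
by split=> //; rewrite Hs Ht e1 e2.
Qed.

Section G.
Variable K : comRingType.
Variables (p q be1 x1 be x : K) (A : nat -> K).
Definition G0 l := p * A l.+2 + q * A l.+1.
Definition G1 l := be1 * G0 l - x1 * A l.+1.
Fixpoint Gpair l j : K * K :=
  match j with
  | 0%N => (G0 l, G1 l)
  | S j => let pr := Gpair l j in (pr.2, be * pr.2 - x * pr.1)
  end.
Definition G l j := (Gpair l j).1.

Lemma G_0 l : G l 0 = G0 l. Proof. by []. Qed.
Lemma G_1 l : G l 1 = G1 l. Proof. by []. Qed.
Lemma G_rec l j : G l j.+2 = be * G l j.+1 - x * G l j. Proof. by []. Qed.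

Lemma G_rec2j l : rec2 be x (fun j => G l j). Proof. by move=> j; exact: G_rec. Qed.

Lemma G_rec2l (bea xa : K) : rec2 bea xa A -> forall j, rec2 bea xa (fun l => G l j).
Proof.
move=> HA.
suff H : forall j, rec2 bea xa (fun l => G l j) /\ rec2 bea xa (fun l => G l j.+1).
  by move=> j; case: (H j).
elim=> [|j [e1 e2]].
  split=> i; rewrite ?G_0 ?G_1 /G1 /G0 !HA; ring.
split=> // i; rewrite !G_rec e1 e2; ring.
Qed.
End G.

Definition U {R : realFieldType} (a b : R) l j :=
  @G _ (cst ((1 - b) / (1 - a))) (cst ((b - a) / (1 - a))) (beta_ab a b) (x_ab a b)
    (beta b) (xc b) (wstar a) l j.
Definition D {R : realFieldType} (a b : R) j l :=
  @G _ (cst ((1 - a) / (1 - b))) (cst ((a - b) / (1 - b))) (beta_ba a b) (x_ba a b)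
    (beta a) (xc a) (wstar b) j l.

Lemma wup_colE (R : realFieldType) (a b : R) f m k :
  (m < f)%N -> wup_col a b f m k = U a b (f - m).-1 k.
Proof.
move=> hm; have hl : (f - m = (f - m).-1.+1)%N by lia.
move: (f - m).-1 hl => l hl.
suff H : wup_col a b f m k = U a b l k /\ wup_col a b f m k.+1 = U a b l k.+1.
  by case: H.
elim: k => [|k [e1 e2]].
  have e0 : wup_col a b f m 0 = U a b l 0 by rewrite /= hl.
  split=> //.
  have -> : wup_col a b f m 1 = beta_ab a b * wup_col a b f m 0 - x_ab a b * (if m.+1 == f then 1 else wstar a (f - m)) by [].
  rewrite e0 /U G_1 /G1; congr (_ - _ * _).
  case: ifP => [/eqP hf|_]; last by rewrite hl.
  by have -> : l = 0%N by lia.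
split=> //.
by rewrite /U G_rec -/(U a b l k.+1) -/(U a b l k) -e1 -e2.
Qed.

Lemma wdown_colE (R : realFieldType) (a b : R) f n k :
  wdown_col a b f n k = D a b (n - f) k.
Proof.
suff H : wdown_col a b f n k = D a b (n - f) k /\ wdown_col a b f n k.+1 = D a b (n - f) k.+1.
  by case: H.
elim: k => [|k [e1 e2]].
  have e0 : wdown_col a b f n 0 = D a b (n - f) 0 by [].
  split=> //.
  have -> : wdown_col a b f n 1 = beta_ba a b * wdown_col a b f n 0 - x_ba a b * (if n == f then 1 else wstar b (n - f).+1) by [].
  rewrite e0 /D G_1 /G1; congr (_ - _ * _).
  case: ifP => [/eqP hf|_] //.
  by rewrite hf subnn.
split=> //.
by rewrite /D G_rec -/(D a b (n - f)%N k.+1) -/(D a b (n - f)%N k) -e1 -e2.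
Qed.

Section Generic.
Variable F : fieldType.
Variables (a b r y z : F).
Definition gom c : F := 1 - (1 - c) ^+ 2 * r ^+ 2 * y ^+ 2 * z ^+ 2.
Definition gta c : F := 1 + (1 - c) ^+ 2 * r ^+ 2 * z ^+ 2 * y * (1 - y).
Definition gxx c : F := c ^+ 2 * z ^+ 2 * gta c ^+ 2.
Definition gbt c : F := 1 + z ^+ 2 * (c ^+ 2 - (1 - c) ^+ 2 * r ^+ 2 * (y ^+ 2 + c ^+ 2 * (1 - y) ^+ 2 * z ^+ 2)).
Definition gt2 : F := 1 + (1 - a) * (1 - b) * r ^+ 2 * z ^+ 2 * y * (1 - y).
Definition gxab : F := b ^+ 2 * z ^+ 2 * gt2 ^+ 2.
Definition gxba : F := a ^+ 2 * z ^+ 2 * gt2 ^+ 2.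
Definition gbab : F := gbt b - (b - a) * b ^+ 2 * (1 - b) * r ^+ 2 * (1 - y) ^+ 2 * z ^+ 4.
Definition gbba : F := gbt a - (a - b) * a ^+ 2 * (1 - a) * r ^+ 2 * (1 - y) ^+ 2 * z ^+ 4.
Let A2 := gom a.
Let A3 := gbt a * gom a - gxx a.
Let B2 := gom b.
Let B3 := gbt b * gom b - gxx b.
Definition gU0 l := (1 - b) / (1 - a) * (if l then A3 else A2) + (b - a) / (1 - a) * (if l then A2 else 1).
Definition gU1 l := gbab * gU0 l - gxab * (if l then A2 else 1).
Definition gD0 l := (1 - a) / (1 - b) * (if l then B3 else B2) + (a - b) / (1 - b) * (if l then B2 else 1).
Definition gD1 l := gbba * gD0 l - gxba * (if l then B2 else 1).
Hypotheses (ha : 1 - a != 0) (hb : 1 - b != 0).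
Lemma gc00 : gU0 false = gD0 false.
Proof. rewrite /gU0 /gD0 /A2 /B2 /gom. field. by rewrite ha hb. Qed.
Lemma gc10 : gU0 true = gD1 false.
Proof. rewrite /gU0 /gD1 /gD0 /A2 /A3 /B2 /gbba /gxba /gt2 /gbt /gxx /gta /gom. field. by rewrite ha hb. Qed.
Lemma gc01 : gU1 false = gD0 true.
Proof. rewrite /gU1 /gU0 /gD0 /A2 /B2 /B3 /gbab /gxab /gt2 /gbt /gxx /gta /gom. field. by rewrite ha hb. Qed.
Lemma gc11 : gU1 true = gD1 true.
Proof. rewrite /gU1 /gU0 /gD1 /gD0 /A2 /A3 /B2 /B3 /gbab /gbba /gxab /gxba /gt2 /gbt /gxx /gta /gom. field. by rewrite ha hb. Qed.
End Generic.
Arguments gom {F}. Arguments gta {F}. Arguments gxx {F}. Arguments gbt {F}.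
Arguments gt2 {F}. Arguments gxab {F}. Arguments gxba {F}. Arguments gbab {F}.
Arguments gbba {F}. Arguments gU0 {F}. Arguments gU1 {F}. Arguments gD0 {F}. Arguments gD1 {F}.
Arguments gc00 {F}. Arguments gc10 {F}. Arguments gc01 {F}. Arguments gc11 {F}.

Section Link.
Variable R : realFieldType.
Variables (a b : R).
Local Notation r := (var_r R).
Local Notation y := (var_y R).
Local Notation z := (var_z R).
Lemma omegaE c : omega c = gom r y z (cst c).
Proof. by rewrite /omega /gom !cstE. Qed.
Lemma tauE c : tau c = gta r y z (cst c).
Proof. by rewrite /tau /gta !cstE. Qed.
Lemma xcE c : xc c = gxx r y z (cst c).
Proof. by rewrite /xc /gxx tauE !cstE. Qed.
Lemma betaE c : beta c = gbt r y z (cst c).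
Proof. by rewrite /beta /gbt !cstE. Qed.
Lemma tau2E : tau2 a b = gt2 (cst a) (cst b) r y z.
Proof. by rewrite /tau2 /gt2 !cstE. Qed.
Lemma x_abE : x_ab a b = gxab (cst a) (cst b) r y z.
Proof. by rewrite /x_ab /gxab tau2E !cstE. Qed.
Lemma x_baE : x_ba a b = gxba (cst a) (cst b) r y z.
Proof. by rewrite /x_ba /gxba tau2E !cstE. Qed.
Lemma beta_abE : beta_ab a b = gbab (cst a) (cst b) r y z.
Proof. by rewrite /beta_ab /gbab betaE !cstE. Qed.
Lemma beta_baE : beta_ba a b = gbba (cst a) (cst b) r y z.
Proof. by rewrite /beta_ba /gbba betaE !cstE. Qed.
End Link.

Lemma corners (R : realFieldType) (a b : R) :
  a != 0 -> b != 0 -> a != 1 -> b != 1 ->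
  [/\ U a b 0 0 = D a b 0 0, U a b 1 0 = D a b 0 1,
      U a b 0 1 = D a b 1 0 & U a b 1 1 = D a b 1 1].
Proof.
move=> a0 b0 a1 b1.
have ha : 1 - cst a != 0 by rewrite -cst1 -cstB cst_eq0 subr_eq0 eq_sym.
have hb : 1 - cst b != 0 by rewrite -cst1 -cstB cst_eq0 subr_eq0 eq_sym.
rewrite /U /D !(G_0, G_1) /G1 /G0 !wstar3 // !wstar2 // !wstar1.
rewrite !omegaE !betaE !xcE beta_abE beta_baE x_abE x_baE !cstE.
split.
- exact: (gc00 (cst a) (cst b) (var_r R) (var_y R) (var_z R) ha hb).
- exact: (gc10 (cst a) (cst b) (var_r R) (var_y R) (var_z R) ha hb).
- exact: (gc01 (cst a) (cst b) (var_r R) (var_y R) (var_z R) ha hb).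
- exact: (gc11 (cst a) (cst b) (var_r R) (var_y R) (var_z R) ha hb).
Qed.

Lemma UD (R : realFieldType) (a b : R) :
  a != 0 -> b != 0 -> a != 1 -> b != 1 -> forall l j, U a b l j = D a b j l.
Proof.
move=> a0 b0 a1 b1; case: (@corners R a b a0 b0 a1 b1) => c00 c10 c01 c11.
have RUa : forall j, rec2 (beta a) (xc a) (fun l => U a b l j).
  by move=> j; apply: G_rec2l => i; exact: wstar_rec.
have RDb : forall l, rec2 (beta b) (xc b) (fun j => D a b j l).
  by move=> l; apply: G_rec2l => i; exact: wstar_rec.
have RDa : forall j, rec2 (beta a) (xc a) (fun l => D a b j l).
  by move=> j i; rewrite /D G_rec.
have RUb : forall l, rec2 (beta b) (xc b) (fun j => U a b l j).
  by move=> l i; rewrite /U G_rec.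
have s0 := @rec2_eq _ _ _ _ _ (RUa 0%N) (RDa 0%N) c00 c10.
have s1 := @rec2_eq _ _ _ _ _ (RUa 1%N) (RDa 1%N) c01 c11.
move=> l; exact: (@rec2_eq _ _ _ _ _ (RUb l) (RDb l) (s0 l) (s1 l)).
Qed.

Theorem lemma2 (R : realFieldType) (a b : R) (f : nat) :
  0 < a < 1 -> 0 < b < 1 -> (3 <= f)%N ->
  forall m n : nat, (1 <= m)%N -> (m < n)%N ->
    wbar a b f m n = wbar a b f n.-1 m.-1.
Proof.
move=> /andP [a0 a1] /andP [b0 b1] hf m n hm hmn.
have a0' : a != 0 by rewrite gt_eqF.
have b0' : b != 0 by rewrite gt_eqF.
have a1' : a != 1 by rewrite lt_eqF.
have b1' : b != 1 by rewrite lt_eqF.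
rewrite /wbar hmn.
have -> : (n.-1 < m.-1)%N = false by apply/negbTE; rewrite -leqNgt; lia.
have -> : (m.-1 < n.-1)%N = true by apply/idP; lia.
rewrite /wup /wdown.
have -> : (n.-1 == m.-1.+1) = (n == m.+1) by apply/eqP/eqP; lia.
case: eqP => // hn.
have [h1|h1] := leqP n f.
  have -> : (n.-1 <= f.-1)%N = true by apply/idP; lia.
  by have -> : (n.-1 - m.-1 = n - m)%N by lia.
have -> : (n.-1 <= f.-1)%N = false by apply/negbTE; rewrite -ltnNge; lia.
have [h2|h2] := leqP f m.
  have -> : (f.-1 <= m.-1)%N = true by apply/idP; lia.
  by have -> : (n.-1 - m.-1 = n - m)%N by lia.
have -> : (f.-1 <= m.-1)%N = false by apply/negbTE; rewrite -ltnNge; lia.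
rewrite wup_colE // wdown_colE UD //.
have -> : (n.-1 - f = n - f.+1)%N by lia.
by have -> : (f - 2 - m.-1 = (f - m).-1)%N by lia.
Qed.
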